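(* For natural numbers $n\le m$, $\dim(W_{n,m})\leq\binom{m}{n}\cdot\frac{(m-1)!}{(n-1)!}$.
   Context: $\mathbb{F}$ is a field of characteristic zero; $\mathbb{F}\langle X\rangle$ the free non-unitary associative algebra on $X=\{x_1,x_2,\dots\}$; $(x^n)^T$ the smallest ideal containing $x^n$ invariant under all algebra endomorphisms; $V_m$ the space of multilinear polynomials of degree $m$ in $x_1,\dots,x_m$; $W_{n,m}:=V_m\cap(x^n)^T$. *)

(* Defs.v *)
From HB Require Import structures.
From mathcomp Require Import all_boot all_order all_algebra.
Set Implicit Arguments. Unset Strict Implicit. Unset Printing Implicit Defensive.
Import GRing.Theory.
Local Open Scope ring_scope.

(* A word is a seq nat,
   the letter i standing for the variable x_(i+1).  Elements are represented
   as coefficient functions  seq nat -> F  (formal series in noncommuting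
   variables); the free non-unitary algebra F<X> consists of the
   finitely supported ones with zero constant term (predicate [fpoly]). *)

Definition ser (F : fieldType) := seq nat -> F.

Section FreeAlg.
Variable F : fieldType.

Definition ser0 : ser F := fun _ => 0.
Definition serD (f g : ser F) : ser F := fun w => f w + g w.
Definition serZ (c : F) (f : ser F) : ser F := fun w => c * f w.
Definition serM (f g : ser F) : ser F :=
  fun w => \sum_(i < (size w).+1) f (take i w) * g (drop i w).

Definition fpoly (f : ser F) : Prop :=
  f [::] = 0 /\ exists s : seq (seq nat), forall w, w \notin s -> f w = 0.

Definition xvar : ser F := fun w => if w == [:: 0%N] then 1 else 0.
Definition serX (f : ser F) (n : nat) : ser F := iter n.-1 (serM f) f.

Definition endo (psi : ser F -> ser F) : Prop :=
  [/\ forall f, fpoly f -> fpoly (psi f),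
      forall f g, fpoly f -> fpoly g -> psi (serD f g) = serD (psi f) (psi g),
      forall c f, fpoly f -> psi (serZ c f) = serZ c (psi f) &
      forall f g, fpoly f -> fpoly g -> psi (serM f g) = serM (psi f) (psi g)].

Definition Tideal (I : ser F -> Prop) : Prop :=
  (forall f, I f -> fpoly f) /\
  [/\ I ser0,
      forall f g, I f -> I g -> I (serD f g),
      forall c f, I f -> I (serZ c f),
      forall f g, I f -> fpoly g -> I (serM g f) /\ I (serM f g) &
      forall psi f, endo psi -> I f -> I (psi f)].

Definition TxN (n : nat) (f : ser F) : Prop :=
  forall I, Tideal I -> I (serX xvar n) -> I f.

Definition Vm (m : nat) (f : ser F) : Prop :=
  fpoly f /\ forall w, f w != 0 -> perm_eq w (iota 0 m).

Definition W (n m : nat) (f : ser F) : Prop := Vm m f /\ TxN n f.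

Definition lin_indep (fs : seq (ser F)) : Prop :=
  forall c : nat -> F,
    (forall w, \sum_(i < size fs) c i * nth ser0 fs i w = 0) ->
    forall i, (i < size fs)%N -> c i = 0.

End FreeAlg.

(* Main.v *)
From HB Require Import structures.
Require Import Defs.
From mathcomp Require Import all_boot all_order all_algebra.
From mathcomp Require Import boolp.
From mathcomp Require Import zify.
Set Implicit Arguments. Unset Strict Implicit. Unset Printing Implicit Defensive.
Import GRing.Theory.

Definition ins_word (x : nat) (w : seq nat) :=
  [seq take j w ++ x :: drop j w | j <- iota 0 (size w).+1].

Fixpoint ins_all (x : nat) (ws : seq (seq nat)) : seq (seq (seq nat)) :=
  match ws with
  | [::] => [::]
  | w :: ws' => [seq w' :: ws' | w' <- ins_word x w] ++ [seq w :: r | r <- ins_all x ws']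
  end.

Fixpoint Bs (m n : nat) : seq (seq (seq nat)) :=
  match m, n with
  | 0, 0 => [:: [::]]
  | 0, _.+1 => [::]
  | _.+1, 0 => [::]
  | m'.+1, n'.+1 => [seq rcons b [:: m'] | b <- Bs m' n'] ++ flatten [seq ins_all m' b | b <- Bs m' n'.+1]
  end.

Lemma ins_word_mem x p q : p ++ x :: q \in ins_word x (p ++ q).
Proof.
apply/mapP; exists (size p); first by rewrite mem_iota size_cat; lia.
by rewrite take_size_cat // drop_size_cat.
Qed.

Lemma ins_all_cons x w ws : ins_all x (w :: ws) =
  [seq w' :: ws | w' <- ins_word x w] ++ [seq w :: r | r <- ins_all x ws].
Proof. by []. Qed.

Lemma ins_all_mem x pre p q suf :
  pre ++ (p ++ x :: q) :: suf \in ins_all x (pre ++ (p ++ q) :: suf).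
Proof.
elim: pre => [|a pre IH]; rewrite ?cat0s ?cat_cons ins_all_cons.
  by rewrite mem_cat; apply/orP; left; apply/mapP; exists (p ++ x :: q) => //; apply: ins_word_mem.
by rewrite mem_cat; apply/orP; right; apply/mapP; exists (pre ++ (p ++ x :: q) :: suf).
Qed.

Lemma size_ins_all x ws : size (ins_all x ws) = size (flatten ws) + size ws.
Proof.
elim: ws => //= w ws IH; rewrite size_cat !size_map IH size_iota size_cat; lia.
Qed.

Lemma ins_all_inv x ws r : r \in ins_all x ws -> size r = size ws /\ size (flatten r) = (size (flatten ws)).+1.
Proof.
elim: ws r => [//|w ws IH] r; rewrite ins_all_cons mem_cat => /orP[/mapP[w' /mapP[j _ ->] ->]|/mapP[r' /IH [H1 H2] ->]] /=.
  by rewrite !size_cat /= size_take size_drop; split => //; case: ltnP; lia.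
by rewrite !size_cat H1 H2; split => //; lia.
Qed.

Lemma Bs_inv m n b : b \in Bs m n -> size b = n /\ size (flatten b) = m.
Proof.
elim: m n b => [|m IH] [|n] b //=; rewrite ?inE.
- by move/eqP => ->.
- rewrite mem_cat => /orP[/mapP[b' /IH [H1 H2] ->]|/flattenP[rs /mapP[b' /IH [H1 H2] ->] /ins_all_inv [H3 H4]]].
    by rewrite size_rcons -cats1 flatten_cat size_cat H1 H2 /= addn1.
  by rewrite H3 H4 H1 H2.
Qed.

Lemma size_Bs_S m n :
  size (Bs m.+1 n.+1) = size (Bs m n) + (m + n.+1) * size (Bs m n.+1).
Proof.
rewrite /= size_cat size_map size_flatten; congr (_ + _).
rewrite /shape -map_comp.
have : forall b, b \in Bs m n.+1 -> size (ins_all m b) = m + n.+1.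
  by move=> b /Bs_inv [H1 H2]; rewrite /= size_ins_all H1 H2.
elim: (Bs m n.+1) => [|b bs IH] H; first by rewrite muln0.
rewrite /= H ?inE ?eqxx // IH; first by rewrite mulnS.
by move=> c cb; apply: H; rewrite inE cb orbT.
Qed.

Lemma size_Bs0 m : size (Bs m 0) = (m == 0).
Proof. by case: m. Qed.

Lemma size_Bs m n : 0 < n -> size (Bs m n) * (n.-1)`! = 'C(m, n) * (m.-1)`!.
Proof.
elim: m n => [|m IH] [|n] // _.
rewrite size_Bs_S mulnDl.
case: n => [|k].
  rewrite size_Bs0 fact0 !muln1 bin1.
  have := IH 1 isT; rewrite fact0 muln1 bin1 => ->.
  case: m {IH} => [|m] /=; first by [].
  by rewrite factS; lia.
have E1 := IH k.+1 isT; have E2 := IH k.+2 isT.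
rewrite /= in E1 E2 *.
rewrite factS mulnA (mulnC (size _)) -mulnA E1.
rewrite -mulnA E2.
case: m {IH E1 E2} => [|m] /=; first by rewrite !bin0n !muln0.
rewrite factS.
have Hc : 'C(m.+2, k.+2) = 'C(m.+1, k.+1) + 'C(m.+1, k.+2) by rewrite binS addnC.
rewrite Hc.
have E := mul_bin_left m.+1 k.+1.
case: (leqP k.+1 m.+1) => km; last by rewrite !bin_small //; lia.
move: E; rewrite subSS.
move: ('C(m.+1, k.+1)) ('C(m.+1, k.+2)) (m`!) => a b f E.
have [d Hd] : exists d, m = k + d by exists (m - k); lia.
rewrite Hd addKn in E; rewrite Hd.
have -> : (a + b) * ((k + d).+1 * f) = (k + d).+1 * (a * f) + (k + d).+1 * (b * f).
  by rewrite mulnDl !mulnA (mulnC a) (mulnC b).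
have E' : k.+2 * (b * f) = d * (a * f) by rewrite mulnA E mulnA.
move: E'; move: (a * f) (b * f) => A B E'.
lia.
Qed.

Lemma Bs_cover m n ws : size ws = n -> (forall w, w \in ws -> w != [::]) ->
  perm_eq (flatten ws) (iota 0 m) -> exists2 b, b \in Bs m n & perm_eq ws b.
Proof.
elim: m n ws => [|m IH] n ws Hs Hne Hp.
  have Hf : flatten ws = [::] by apply/perm_nilP.
  case: ws Hs Hne Hp Hf => [|w ws] /=; first by move=> <-; exists [::]; rewrite ?inE.
  move=> _ Hne _; have := Hne w; rewrite inE eqxx => /(_ isT); case: w {Hne} => //= a w _ Hf; discriminate Hf.

have mws : m \in flatten ws by rewrite (perm_mem Hp) mem_iota; lia.
case/flattenP: mws => w wws mw.
have Pw := perm_to_rem wws.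
set rest := rem w ws in Pw.
have Hrest : forall v, v \in rest -> v != [::] by move=> v /mem_rem; apply: Hne.
have Hsr : size rest = n.-1 by rewrite size_rem // Hs.
case: n Hs Hsr => [|n] Hs Hsr; first by move: Hs wws; case: ws {Pw rest Hrest Hsr Hne Hp} => //.
rewrite /= in Hsr.
have Hfl : perm_eq (flatten ws) (w ++ flatten rest) by apply: (perm_flatten Pw).
case/splitPr: mw Pw Hfl => p q Pw Hfl.
have HX : perm_eq (p ++ q ++ flatten rest) (iota 0 m).
  rewrite -(perm_cons m).
  have : perm_eq (m :: iota 0 m) (iota 0 m.+1).
    by rewrite -addn1 iotaD add0n /= cats1 perm_sym perm_rcons.
  move=> H1; apply: (@perm_trans _ (flatten ws)).
    rewrite perm_sym; apply: (perm_trans Hfl).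
    by rewrite -catA /= (perm_catCA p [:: m]).
  by apply: (perm_trans Hp); rewrite perm_sym.
case: (altP ((p ++ q) =P [::])) => [pq0|pqn].
  have [p0 q0] : p = [::] /\ q = [::] by move: pq0; case: (p) (q) => [|? ?] [|? ?].
  rewrite p0 q0 /= in Pw HX.
  have [b bB rb] := IH n rest Hsr Hrest HX.
  exists (rcons b [:: m]).
    by rewrite /= mem_cat; apply/orP; left; apply/mapP; exists b.
  by apply: perm_trans Pw _; rewrite perm_sym perm_rcons perm_cons perm_sym.
have Hws' : forall v, v \in (p ++ q) :: rest -> v != [::].
  by move=> v; rewrite inE => /orP[/eqP->//|]; apply: Hrest.
have [b bB rb] := IH n.+1 ((p ++ q) :: rest) ltac:(by rewrite /= Hsr) Hws' (ltac:(by rewrite /= -catA)).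
have pqb : p ++ q \in b by rewrite -(perm_mem rb) inE eqxx.
case/splitPr: pqb rb bB => pre suf rb bB.
exists (pre ++ (p ++ m :: q) :: suf).
  rewrite /= mem_cat; apply/orP; right; apply/flattenP.
  exists (ins_all m (pre ++ (p ++ q) :: suf)); first by apply/mapP; exists (pre ++ (p ++ q) :: suf).
  exact: ins_all_mem.
apply: perm_trans Pw _.
rewrite perm_sym (perm_catCA pre [:: p ++ m :: q] suf) /= perm_cons.
have := rb; rewrite perm_sym (perm_catCA pre [:: p ++ q] suf) /= perm_cons.
by rewrite perm_sym.
Qed.


Local Open Scope ring_scope.

Section SerRing.
Variable F : fieldType.
Local Notation S := (ser F).

HB.instance Definition _ := gen_eqMixin S.
HB.instance Definition _ := gen_choiceMixin S.

Definition serN (f : S) : S := fun w => - f w.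

Lemma serE (f g : S) : (forall w, f w = g w) -> f = g.
Proof. exact: funext. Qed.

Lemma serDA : associative (@serD F).
Proof. by move=> f g h; apply: serE => w; rewrite /serD addrA. Qed.
Lemma serDC : commutative (@serD F).
Proof. by move=> f g; apply: serE => w; rewrite /serD addrC. Qed.
Lemma ser0D : left_id (@ser0 F) (@serD F).
Proof. by move=> f; apply: serE => w; rewrite /serD /ser0 add0r. Qed.
Lemma serND : left_inverse (@ser0 F) serN (@serD F).
Proof. by move=> f; apply: serE => w; rewrite /serD /ser0 /serN addNr. Qed.

HB.instance Definition _ := GRing.isZmodule.Build S serDA serDC ser0D serND.

Definition ser1 : S := fun w => if w == [::] then 1 else 0.

Lemma serM1 : right_id ser1 (@serM F).
Proof.
move=> f; apply: serE => w; rewrite /serM big_ord_recr /= take_size drop_size /ser1 eqxx mulr1.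
rewrite big1 ?add0r // => i _; rewrite /ser1.
have -> : (drop i w == [::]) = false.
  by apply/negbTE; rewrite -size_eq0 size_drop subn_eq0 -ltnNge ltn_ord.
by rewrite mulr0.
Qed.

Lemma ser1M : left_id ser1 (@serM F).
Proof.
move=> f; apply: serE => w; rewrite /serM big_ord_recl /= take0 drop0 /ser1 eqxx mul1r.
rewrite big1 ?addr0 // => i _.
have -> : (take (bump 0 i) w == [::]) = false.
  by move: i; case: w => [[]|].
by rewrite mul0r.
Qed.

Lemma serMDl : left_distributive (@serM F) (@serD F).
Proof.
by move=> f g h; apply: serE => w; rewrite /serM /serD -big_split /=; apply: eq_bigr => i _; rewrite mulrDl.
Qed.
Lemma serMDr : right_distributive (@serM F) (@serD F).
Proof.
by move=> f g h; apply: serE => w; rewrite /serM /serD -big_split /=; apply: eq_bigr => i _; rewrite mulrDr.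
Qed.

Lemma ser1_neq0 : ser1 != (@ser0 F).
Proof.
apply/eqP => /(congr1 (fun f : S => f [::])); rewrite /ser1 /ser0 eqxx => /eqP.
by rewrite oner_eq0.
Qed.

Lemma serMA : associative (@serM F).
Proof.
move=> f g h; apply: serE => w; rewrite /serM.
set N := size w.
pose a j i := f (take j w) * (g (take (i - j) (drop j w)) * h (drop i w)).
have L : \sum_(i < N.+1) (\sum_(j < (size (take i w)).+1)
     f (take j (take i w)) * g (drop j (take i w))) * h (drop i w)
   = \sum_(0 <= i < N.+1) \sum_(0 <= j < N.+1 | (j <= i)%N) a j i.
  rewrite big_mkord; apply: eq_bigr => i _.
  have iN : (i <= N)%N by rewrite -ltnS.
  rewrite size_takel // big_distrl /= -(big_mkord xpredT (fun j => f (take j (take i w)) * g (drop j (take i w)) * h (drop i w))).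
  rewrite (big_nat_widen 0 i.+1 N.+1) //.
  rewrite big_nat_cond [RHS]big_nat_cond; apply: eq_bigr => j /andP[/andP[_ jN] ji].
  rewrite /a take_takel // -mulrA; congr (_ * (_ * _)).
  by rewrite take_drop subnK.
have R : \sum_(i < N.+1) f (take i w) * (\sum_(j < (size (drop i w)).+1)
      g (take j (drop i w)) * h (drop j (drop i w)))
   = \sum_(0 <= j < N.+1) \sum_(0 <= k < N.+1 - j) a j (k + j).
  rewrite big_mkord; apply: eq_bigr => j _.
  have jN : (j <= N)%N by rewrite -ltnS.
  rewrite size_drop big_distrr /= -(big_mkord xpredT (fun k => f (take j w) * (g (take k (drop j w)) * h (drop k (drop j w))))).
  rewrite subSn //; apply: eq_bigr => k _.
  by rewrite /a addnK drop_drop.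
rewrite L R (exchange_big_dep_nat xpredT) //=.
apply: eq_bigr => j _.
rewrite -(big_addn 0 N.+1 j xpredT) add0n.
by rewrite (big_nat_widenl _ 0) // big_mkcond [RHS]big_mkcond.
Qed.


HB.instance Definition _ := GRing.Zmodule_isNzRing.Build S serMA ser1M serM1 serMDl serMDr ser1_neq0.

Lemma serZA (a b : F) (f : S) : serZ a (serZ b f) = serZ (a * b) f.
Proof. by apply: serE => w; rewrite /serZ mulrA. Qed.
Lemma serZ1 : left_id 1 (@serZ F).
Proof. by move=> f; apply: serE => w; rewrite /serZ mul1r. Qed.
Lemma serZDr : right_distributive (@serZ F) (@serD F).
Proof. by move=> a f g; apply: serE => w; rewrite /serZ /serD mulrDr. Qed.
Lemma serZDl (f : S) : {morph (@serZ F)^~ f : a b / a + b >-> serD a b}.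
Proof. by move=> a b; apply: serE => w; rewrite /serZ /serD mulrDl. Qed.

HB.instance Definition _ := GRing.Zmodule_isLmodule.Build F S serZA serZ1 serZDr serZDl.

Lemma scalesE0 (c : F) (f : S) w : (c *: f) w = c * f w. Proof. by []. Qed.
Lemma mulsE0 (f g : S) w : (f * g) w = \sum_(i < (size w).+1) f (take i w) * g (drop i w).
Proof. by []. Qed.
Lemma serZAl (a : F) (f g : S) : a *: (f * g) = (a *: f) * g.
Proof.
apply: serE => w; rewrite scalesE0 !mulsE0 big_distrr /=.
by apply: eq_bigr => i _; rewrite scalesE0 mulrA.
Qed.
HB.instance Definition _ := GRing.Lmodule_isLalgebra.Build F S serZAl.
Lemma serZAr (a : F) (f g : S) : a *: (f * g) = f * (a *: g).
Proof.
apply: serE => w; rewrite scalesE0 !mulsE0 big_distrr /=.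
by apply: eq_bigr => i _; rewrite scalesE0 mulrCA.
Qed.
HB.instance Definition _ := GRing.Lalgebra_isAlgebra.Build F S serZAr.

Lemma addsE (f g : S) w : (f + g) w = f w + g w. Proof. by []. Qed.
Lemma oppsE (f : S) w : (- f) w = - f w. Proof. by []. Qed.
Lemma zerosE w : (0 : S) w = 0. Proof. by []. Qed.
Lemma scalesE (c : F) (f : S) w : (c *: f) w = c * f w. Proof. by []. Qed.
Lemma mulsE (f g : S) w : (f * g) w = \sum_(i < (size w).+1) f (take i w) * g (drop i w).
Proof. by []. Qed.
Lemma onesE w : (1 : S) w = (w == [::])%:R.
Proof. by change (ser1 w = (w == [::])%:R); rewrite /ser1; case: (w == [::]). Qed.
Lemma sumsE (I : Type) (r : seq I) (P : pred I) (G : I -> S) w :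
  (\sum_(i <- r | P i) G i) w = \sum_(i <- r | P i) G i w.
Proof. by apply: (big_morph (fun f : S => f w)). Qed.
Lemma ser0E : @ser0 F = 0. Proof. by []. Qed.
Lemma serDE (f g : S) : serD f g = f + g. Proof. by []. Qed.
Lemma serME (f g : S) : serM f g = f * g. Proof. by []. Qed.
Lemma serZE c (f : S) : serZ c f = c *: f. Proof. by []. Qed.

End SerRing.


Section RemLemmas.
Variable T : eqType.

Lemma perm_rem (y : T) (s t : seq T) : perm_eq s t -> perm_eq (rem y s) (rem y t).
Proof.
move=> st; have [ys|nys] := boolP (y \in s).
  have yt : y \in t by rewrite -(perm_mem st).
  have := perm_to_rem ys; have := perm_to_rem yt => Ht Hs.
  rewrite -(perm_cons y); apply: perm_trans Ht; apply: perm_trans st.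
  by rewrite perm_sym.
have nyt : y \notin t by rewrite -(perm_mem st).
by rewrite !rem_id.
Qed.

Lemma rem_cons_perm (y c : T) (l : seq T) : y \in l -> perm_eq (rem y (c :: l)) (c :: rem y l).
Proof.
move=> yl /=; case: eqP => [->|_]; last by [].
exact: perm_to_rem.
Qed.

Lemma remC (x y : T) (s : seq T) : rem x (rem y s) = rem y (rem x s).
Proof.
elim: s => //= a s IH.
have [ay|ay] := eqVneq a y; have [ax|ax] := eqVneq a x => /=.
- by rewrite -ay -ax.
- by rewrite ay eqxx.
- by rewrite ax eqxx.
- by rewrite (negbTE ax) (negbTE ay) IH.
Qed.

Lemma sumXL (V : nmodType) (s : seq T) (G : T -> T -> V) :
  \sum_(x <- s) \sum_(y <- rem x s) G x y = \sum_(y <- s) \sum_(x <- rem y s) G x y.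
Proof.
elim: s => [|a s IH]; first by rewrite !big_nil.
have E : forall H : T -> T -> V,
    \sum_(x <- a :: s) \sum_(y <- rem x (a :: s)) H x y
    = \sum_(y <- s) H a y + (\sum_(x <- s) H x a + \sum_(x <- s) \sum_(y <- rem x s) H x y).
  move=> H; rewrite big_cons /= eqxx; congr (_ + _).
  rewrite -big_split /= big_seq_cond [RHS]big_seq_cond; apply: eq_bigr => x /andP[xs _].
  by rewrite (perm_big _ (rem_cons_perm a xs)) big_cons.
rewrite (E G) (E (fun x y => G y x)) IH /=.
by rewrite addrCA.
Qed.

Lemma sum_rem_perm (V : nmodType) (s t : seq T) (H : T -> seq T -> V) :
  perm_eq s t -> (forall y a b, perm_eq a b -> H y a = H y b) ->
  \sum_(y <- s) H y (rem y s) = \sum_(y <- t) H y (rem y t).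
Proof.
move=> st HH; rewrite (perm_big _ st) /=.
by apply: eq_bigr => y _; apply: HH; apply: perm_rem.
Qed.

End RemLemmas.

Lemma sum_const_seq (V : nmodType) (T : Type) (s : seq T) (c : V) :
  \sum_(x <- s) c = c *+ size s.
Proof. by elim: s => [|a s IH]; rewrite ?big_nil ?big_cons ?IH ?mulrS. Qed.

Section Sym.
Variable R : pzRingType.

Fixpoint Sk (k : nat) (l : seq R) : R :=
  if k is k'.+1 then \sum_(x <- l) x * Sk k' (rem x l) else 1.
Definition Sy (l : seq R) := Sk (size l) l.

Lemma Sy_nil : Sy [::] = 1. Proof. by []. Qed.

Lemma SyE (l : seq R) : l != [::] -> Sy l = \sum_(x <- l) x * Sy (rem x l).
Proof.
case: l => // a l _; rewrite /Sy /=.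
rewrite big_seq_cond [RHS]big_seq_cond; apply: eq_bigr => x /andP[xl _].
have := size_rem xl; rewrite /Sy /= => ->.
by [].
Qed.

Lemma Sy_perm (l l' : seq R) : perm_eq l l' -> Sy l = Sy l'.
Proof.
move: {2}(size l) (erefl (size l)) => n; elim: n l l' => [|n IH] l l' Hs Hp.
  by case: l Hs Hp => // _; rewrite perm_sym => /perm_nilP ->.
have Hs' : size l' = n.+1 by rewrite -(perm_size Hp).
have ln : l != [::] by case: l Hs Hp.
have ln' : l' != [::] by case: l' Hs' Hp.
rewrite !SyE // (perm_big _ Hp) /= big_seq_cond [RHS]big_seq_cond.
apply: eq_bigr => y /andP[yl' _]; congr (_ * _); apply: IH; last exact: perm_rem.
by rewrite size_rem ?Hs // (perm_mem Hp).
Qed.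


Lemma Sy1 (c : R) : Sy [:: c] = c.
Proof. by rewrite SyE // big_cons big_nil /= eqxx Sy_nil mulr1 addr0. Qed.

Lemma SyC (c : R) (l : seq R) :
  Sy (c :: l) = c * Sy l + \sum_(y <- l) y * Sy (c :: rem y l).
Proof.
rewrite SyE // big_cons /= eqxx; congr (_ + _).
rewrite big_seq_cond [RHS]big_seq_cond; apply: eq_bigr => y /andP[yl _].
by congr (_ * _); apply: Sy_perm; apply: rem_cons_perm.
Qed.

Lemma size_rem_lt (x : R) (l : seq R) n : x \in l -> (size l < n.+1)%N -> (size (rem x l) < n)%N.
Proof. by move=> xl; rewrite size_rem //; case: l xl. Qed.

Lemma SyL1 (u : R) (l : seq R) :
  \sum_(x <- l) Sy (u * x :: rem x l) = Sy (u :: l) - Sy l * u.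
Proof.
elim: {l}(size l).+1 {-2}l (ltnSn (size l)) => // n IH l Hl.
case: (altP (l =P [::])) => [->|ln].
  by rewrite big_nil SyC big_nil addr0 Sy_nil mulr1 mul1r subrr.
rewrite SyC.
have E1 : \sum_(x <- l) Sy (u * x :: rem x l)
   = \sum_(x <- l) u * x * Sy (rem x l)
     + \sum_(x <- l) \sum_(y <- rem x l) y * Sy (u * x :: rem x (rem y l)).
  rewrite -big_split /=; apply: eq_bigr => x _; rewrite SyC; congr (_ + _).
  by apply: eq_bigr => y _; rewrite remC.
rewrite E1 (sumXL l (fun x y => y * Sy (u * x :: rem x (rem y l)))) /=.
have E2 : \sum_(y <- l) \sum_(x <- rem y l) y * Sy (u * x :: rem x (rem y l))
   = \sum_(y <- l) y * (Sy (u :: rem y l) - Sy (rem y l) * u).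
  rewrite big_seq_cond [RHS]big_seq_cond; apply: eq_bigr => y /andP[yl _].
  by rewrite -big_distrr /= IH // size_rem_lt.
rewrite E2 (SyE ln).
have E3 : \sum_(x <- l) u * x * Sy (rem x l) = u * \sum_(x <- l) x * Sy (rem x l).
  by rewrite big_distrr /=; apply: eq_bigr => x _; rewrite mulrA.
rewrite E3.
have E4 : \sum_(y <- l) y * (Sy (u :: rem y l) - Sy (rem y l) * u)
   = \sum_(y <- l) y * Sy (u :: rem y l) - (\sum_(x <- l) x * Sy (rem x l)) * u.
  by rewrite big_distrl -sumrB /=; apply: eq_bigr => y _; rewrite mulrBr mulrA.
by rewrite E4 addrA.
Qed.

Lemma SyR2 (l : seq R) : l != [::] -> Sy l = \sum_(x <- l) Sy (rem x l) * x.
Proof.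
elim: {l}(size l).+1 {-2}l (ltnSn (size l)) => // n IH l Hl ln.
case: l Hl ln => // c [|d l'] Hl _.
  by rewrite Sy1 big_cons big_nil /= eqxx Sy_nil mul1r addr0.
have rn : forall x, x \in [:: c, d & l'] -> rem x [:: c, d & l'] != [::].
  by move=> x xl; rewrite -size_eq0 size_rem.
have ln : [:: c, d & l'] != [::] by [].
move: [:: c, d & l'] ln Hl rn => l ln Hl rn.
rewrite SyE //.
have E1 : \sum_(x <- l) x * Sy (rem x l)
  = \sum_(x <- l) \sum_(y <- rem x l) x * Sy (rem x (rem y l)) * y.
  rewrite big_seq_cond [RHS]big_seq_cond; apply: eq_bigr => x /andP[xl _].
  rewrite IH ?rn ?size_rem_lt // big_distrr /=; apply: eq_bigr => y _.
  by rewrite mulrA remC.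
rewrite E1 (sumXL l (fun x y => x * Sy (rem x (rem y l)) * y)) /=.
rewrite big_seq_cond [RHS]big_seq_cond; apply: eq_bigr => y /andP[yl _].
by rewrite -big_distrl /= -SyE ?rn.
Qed.

Lemma SyM (l : seq R) :
  \sum_(x <- l) \sum_(y <- rem x l) Sy (x * y :: rem y (rem x l)) = (size l).-1%:R * Sy l.
Proof.
case: (altP (l =P [::])) => [->|ln]; first by rewrite big_nil mul0r.
have E : forall x, x \in l -> \sum_(y <- rem x l) Sy (x * y :: rem y (rem x l))
     = Sy l - Sy (rem x l) * x.
  move=> x xl; rewrite SyL1; congr (_ - _); apply: Sy_perm.
  by rewrite perm_sym; apply: perm_to_rem.
rewrite big_seq_cond (eq_bigr (fun x => Sy l - Sy (rem x l) * x)); last first.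
  by move=> x /andP[xl _]; rewrite E.
rewrite -big_seq_cond sumrB sum_const_seq -SyR2 //.
case: l ln {E} => // a l _ /=.
by rewrite mulrS addrC addrK mulr_natl.
Qed.

End Sym.

Lemma Sy_conv (R : pzRingType) (l : seq R) : @Sy R^c l = @Sy R l.
Proof.
elim: {l}(size l).+1 {-2}l (ltnSn (size l)) => // n IH l Hl.
case: (altP (l =P [::])) => [->|ln]; first by [].
rewrite (SyE (R:=R^c)) // (SyR2 ln) big_seq_cond [RHS]big_seq_cond.
apply: eq_bigr => x /andP[xl _].
by rewrite IH // size_rem_lt.
Qed.

Section Key.
Variable R : pzRingType.

Lemma SyL2 (u : R) (l : seq R) :
  \sum_(x <- l) Sy (x * u :: rem x l) = Sy (u :: l) - u * Sy l.
Proof.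
have := SyL1 (R:=R^c) u l.
under eq_bigr => x _ do rewrite Sy_conv.
by rewrite !Sy_conv.
Qed.

Definition SA (u : R) l := \sum_(x <- l) Sy (u * x :: rem x l).
Definition SB (u : R) l := \sum_(x <- l) Sy (x * u :: rem x l).
Definition SC (u : R) l :=
  \sum_(x <- l) \sum_(y <- rem x l) Sy (u :: x * y :: rem y (rem x l)).

Lemma SyMcons (u : R) l : (size l)%:R * Sy (u :: l) = SA u l + SB u l + SC u l.
Proof.
have := SyM (u :: l); rewrite /= => <-.
rewrite big_cons /= eqxx -addrA; congr (_ + _).
rewrite /SB /SC -big_split /= big_seq_cond [RHS]big_seq_cond.
apply: eq_bigr => x /andP[xl _].
rewrite (sum_rem_perm (H := fun y a => Sy (x * y :: a)) (rem_cons_perm u xl)); last first.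
  by move=> y a b ab; apply: Sy_perm; rewrite perm_cons.
rewrite big_cons /= eqxx; congr (_ + _).
rewrite big_seq_cond [RHS]big_seq_cond; apply: eq_bigr => y /andP[yl _].
apply: Sy_perm.
apply: (@perm_trans _ (x * y :: u :: rem y (rem x l))).
  by rewrite perm_cons rem_cons_perm.
by rewrite (perm_catCA [:: x * y] [:: u] _).
Qed.

Lemma SyKeyL (u : R) l :
  (size l)%:R * (u * Sy l) = SA u l + SB u l + SC u l - (size l)%:R * SB u l.
Proof. by rewrite -SyMcons /SB SyL2 mulrBr opprB addrC subrK. Qed.

Lemma SyKeyR (u : R) l :
  (size l)%:R * (Sy l * u) = SA u l + SB u l + SC u l - (size l)%:R * SA u l.
Proof. by rewrite -SyMcons /SA SyL1 mulrBr opprB addrC subrK. Qed.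
End Key.

Section More.
Variable R : pzRingType.

Lemma Sy_nseq (x : R) k : Sy (nseq k x) = k`!%:R * x ^+ k.
Proof.
elim: k => [|k IH]; first by rewrite Sy_nil mul1r expr0.
rewrite SyE //= big_cons /= eqxx big_seq_cond.
rewrite (eq_bigr (fun _ => x * Sy (nseq k x))); last first.
  by move=> y /andP[/nseqP[-> _] _]; rewrite /= eqxx.
rewrite -big_seq_cond sum_const_seq size_nseq -mulrS IH factS natrM -mulr_natl.
rewrite !mulr1 -[X in X = _]mulr_natl -[RHS]mulrA; congr (_ * _).
by rewrite mulrA (commr_nat x) -mulrA -exprS.
Qed.

Variable P : R -> Prop.
Hypothesis P0 : P 0.
Hypothesis PD : forall x y, P x -> P y -> P (x + y).
Hypothesis PM : forall x y, P x -> P y -> P (x * y).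

Lemma P_sum (I : eqType) (r : seq I) (F : I -> R) : (forall i, i \in r -> P (F i)) -> P (\sum_(i <- r) F i).
Proof.
elim: r => [|a r IH] H; first by rewrite big_nil.
rewrite big_cons; apply: PD; first by apply: H; rewrite inE eqxx.
by apply: IH => i ir; apply: H; rewrite inE ir orbT.
Qed.

Lemma P_Sy (l : seq R) : l != [::] -> (forall x, x \in l -> P x) -> P (Sy l).
Proof.
elim: {l}(size l).+1 {-2}l (ltnSn (size l)) => // n IH l Hl ln Hx.
case: l Hl ln Hx => // c [|d l'] Hl _ Hx.
  by rewrite Sy1; apply: Hx; rewrite inE eqxx.
rewrite SyE //; apply: P_sum => x xl; apply: PM; first exact: Hx.
apply: IH; first exact: size_rem_lt.
  by rewrite -size_eq0 size_rem.
by move=> y /mem_rem; apply: Hx.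
Qed.

Variable psi : R -> R.
Hypothesis psiD : forall x y, P x -> P y -> psi (x + y) = psi x + psi y.
Hypothesis psiM : forall x y, P x -> P y -> psi (x * y) = psi x * psi y.

Lemma psi0 : psi 0 = 0.
Proof.
have h := psiD P0 P0; rewrite addr0 in h.
by apply: (addrI (psi 0)); rewrite addr0 -h.
Qed.

Lemma psi_sum (I : eqType) (r : seq I) (F : I -> R) : (forall i, i \in r -> P (F i)) ->
  psi (\sum_(i <- r) F i) = \sum_(i <- r) psi (F i).
Proof.
elim: r => [|a r IH] H; first by rewrite !big_nil psi0.
have Ha : P (F a) by apply: H; rewrite inE eqxx.
have Hr : forall i, i \in r -> P (F i) by move=> i ir; apply: H; rewrite inE ir orbT.
by rewrite !big_cons psiD ?IH //; apply: P_sum.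
Qed.

Lemma Sy_hom (l : seq R) : l != [::] -> (forall x, x \in l -> P x) ->
  psi (Sy l) = Sy (map psi l).
Proof.
elim: {l}(size l).+1 {-2}l (ltnSn (size l)) => // n IH l Hl ln Hx.
case: l Hl ln Hx => // c [|d l'] Hl _ Hx.
  by rewrite /= !Sy1.
have rn : forall x, x \in [:: c, d & l'] -> rem x [:: c, d & l'] != [::].
  by move=> x xl; rewrite -size_eq0 size_rem.
have ln : [:: c, d & l'] != [::] by [].
move: [:: c, d & l'] ln Hl rn Hx => l ln Hl rn Hx.
have Hrem : forall x, x \in l -> forall y, y \in rem x l -> P y.
  by move=> x _ y /mem_rem; apply: Hx.
rewrite SyE // psi_sum; last first.
  move=> x xl; apply: PM; first exact: Hx.
  by apply: P_Sy; [apply: rn | apply: Hrem xl].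
rewrite SyE; last by case: l ln {Hl rn Hx Hrem}.
rewrite big_map big_seq_cond [RHS]big_seq_cond; apply: eq_bigr => x /andP[xl _].
rewrite psiM ?Hx //; last by apply: P_Sy; [apply: rn | apply: Hrem xl].
rewrite IH ?size_rem_lt ?rn //; last exact: Hrem xl.
congr (_ * _); apply: Sy_perm.
have := perm_rem (psi x) (perm_map psi (perm_to_rem xl)).
  by rewrite /= eqxx perm_sym.
exact: Hx.
Qed.
End More.

Lemma Sy_linD (R : pzRingType) (a b : R) l : Sy ((a + b) :: l) = Sy (a :: l) + Sy (b :: l).
Proof.
elim: {l}(size l).+1 {-2}l (ltnSn (size l)) a b => // n IH l Hl a b.
rewrite !SyC mulrDl addrACA -big_split /=; congr (_ + _).
rewrite big_seq_cond [RHS]big_seq_cond; apply: eq_bigr => y /andP[yl _].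
by rewrite IH ?size_rem_lt // mulrDr.
Qed.

Lemma Sy_linZ (K : pzRingType) (R : algType K) (c : K) (a : R) l :
  Sy ((c *: a) :: l) = c *: Sy (a :: l).
Proof.
elim: {l}(size l).+1 {-2}l (ltnSn (size l)) a => // n IH l Hl a.
rewrite !SyC scalerDr -scalerAl; congr (_ + _).
rewrite scaler_sumr big_seq_cond [RHS]big_seq_cond; apply: eq_bigr => y /andP[yl _].
by rewrite IH ?size_rem_lt // scalerAr.
Qed.


Section Main.
Variable F : fieldType.
Local Notation S := (ser F).

Definition mon (w : seq nat) : S := fun v => (v == w)%:R.

Lemma fpoly0 : fpoly (0 : S).
Proof. by split => //; exists [::]. Qed.

Lemma fpolyD (f g : S) : fpoly f -> fpoly g -> fpoly (f + g).
Proof.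
move=> [f0 [sf Hf]] [g0 [sg Hg]]; split; first by rewrite addsE f0 g0 addr0.
exists (sf ++ sg) => w; rewrite mem_cat negb_or => /andP[wf wg].
by rewrite addsE Hf // Hg // addr0.
Qed.

Lemma fpolyZ c (f : S) : fpoly f -> fpoly (c *: f).
Proof.
move=> [f0 [sf Hf]]; split; first by rewrite scalesE f0 mulr0.
by exists sf => w wf; rewrite scalesE Hf // mulr0.
Qed.

Lemma fpolyM (f g : S) : fpoly f -> fpoly g -> fpoly (f * g).
Proof.
move=> [f0 [sf Hf]] [g0 [sg Hg]]; split.
  by rewrite mulsE big_ord_recl big_ord0 /= f0 mul0r addr0.
exists [seq u ++ v | u <- sf, v <- sg] => w ws.
rewrite mulsE big1 // => i _.
case: (boolP (take i w \in sf)) => [tf|tf]; last by rewrite Hf // mul0r.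
case: (boolP (drop i w \in sg)) => [dg|dg]; last by rewrite Hg // mulr0.
by move: ws; rewrite -{1}(cat_take_drop i w) allpairs_f.
Qed.

Lemma fpolyN (f : S) : fpoly f -> fpoly (- f).
Proof. by move=> Hf; rewrite -scaleN1r; apply: fpolyZ. Qed.

Lemma fpoly_mon w : w != [::] -> fpoly (mon w).
Proof.
move=> wn; split; first by rewrite /mon eq_sym (negbTE wn).
by exists [:: w] => v; rewrite inE /mon => /negbTE ->.
Qed.

Lemma fpoly_sum (I : eqType) (r : seq I) (G : I -> S) :
  (forall i, i \in r -> fpoly (G i)) -> fpoly (\sum_(i <- r) G i).
Proof. by apply: (P_sum fpoly0 fpolyD). Qed.

Lemma fpoly_dec (f : S) : fpoly f ->
  exists s, [/\ uniq s, forall w, w \in s -> w != [::] & f = \sum_(w <- s) f w *: mon w].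
Proof.
move=> [f0 [s0 Hf]]; exists (undup [seq w <- s0 | w != [::]]); split.
- exact: undup_uniq.
- by move=> w; rewrite mem_undup mem_filter => /andP[].
apply: serE => v; rewrite sumsE.
under eq_bigr => w _ do rewrite scalesE /mon.
have [vs|vs] := boolP (v \in undup [seq w <- s0 | w != [::]]).
  rewrite (bigD1_seq v) //= ?undup_uniq // eqxx mulr1 big1 ?addr0 //.
  by move=> w /negbTE; rewrite eq_sym => ->; rewrite mulr0.
rewrite big1_seq; last first.
  by move=> w /andP[_ ws]; case: eqP => [ev|]; [rewrite ev ws in vs | rewrite mulr0].
move: vs; rewrite mem_undup mem_filter negb_and negbK => /orP[/eqP->//|].
by move=> /Hf.
Qed.


Section Span.
Variable T : eqType.
Variable gen : T -> S.
Variable ok : T -> Prop.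

Definition spanG (f : S) :=
  exists L : seq (F * T), f = \sum_(p <- L) p.1 *: gen p.2 /\ forall p, p \in L -> ok p.2.

Lemma span0 : spanG 0.
Proof. by exists [::]; rewrite big_nil; split. Qed.

Lemma spanD f g : spanG f -> spanG g -> spanG (f + g).
Proof.
move=> [L1 [-> H1]] [L2 [-> H2]]; exists (L1 ++ L2); rewrite big_cat; split => //.
by move=> p; rewrite mem_cat => /orP[/H1|/H2].
Qed.

Lemma spanZ c f : spanG f -> spanG (c *: f).
Proof.
move=> [L [-> H]]; exists [seq (c * p.1, p.2) | p <- L]; split.
  by rewrite big_map scaler_sumr; apply: eq_bigr => p _; rewrite scalerA.
by move=> p /mapP[q qL ->] /=; apply: H.
Qed.

Lemma spanN f : spanG f -> spanG (- f).
Proof. by move=> H; rewrite -scaleN1r; apply: spanZ. Qed.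

Lemma spanB f g : spanG f -> spanG g -> spanG (f - g).
Proof. by move=> Hf Hg; apply: spanD => //; apply: spanN. Qed.

Lemma span_gen t : ok t -> spanG (gen t).
Proof. by move=> H; exists [:: (1, t)]; rewrite big_seq1 scale1r; split => // p; rewrite inE => /eqP->. Qed.

Lemma span_sum (I : eqType) (r : seq I) (G : I -> S) :
  (forall i, i \in r -> spanG (G i)) -> spanG (\sum_(i <- r) G i).
Proof.
elim: r => [|a r IH] H; first by rewrite big_nil; apply: span0.
rewrite big_cons; apply: spanD; first by apply: H; rewrite inE eqxx.
by apply: IH => i ir; apply: H; rewrite inE ir orbT.
Qed.
End Span.

Definition okI n (l : seq S) := size l = n /\ forall x, x \in l -> fpoly x.
Definition Iset n := spanG (@Sy _) (okI n).

Lemma natmulE n (x : S) : n%:R * x = (n%:R : F) *: x.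
Proof. by rewrite mulr_natl scaler_nat. Qed.

Hypothesis charF0 : [pchar F]%R =i pred0.

Lemma natF_neq0 n : n != 0%N -> (n%:R : F) != 0.
Proof. by move=> n0; have /pcharf0P -> := charF0. Qed.

Lemma Iset_unscale n (x : S) : n != 0%N -> Iset n (n%:R * x) -> Iset n x.
Proof.
move=> n0 H; have -> : x = (n%:R : F)^-1 *: (n%:R * x).
  by rewrite natmulE scalerA mulVf ?natF_neq0 ?scale1r.
exact: spanZ.
Qed.

Lemma okI_cons n g x l : (0 < n)%N -> okI n l -> fpoly g -> x \in l ->
  okI n (g :: rem x l).
Proof.
move=> n0 [Hs Hf] Hg xl; split; first by rewrite /= size_rem // Hs prednK.
by move=> y; rewrite inE => /orP[/eqP->//|/mem_rem]; apply: Hf.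
Qed.

Lemma okI_cons2 n g z x y l : okI n l -> fpoly g -> fpoly z -> x \in l -> y \in rem x l ->
  okI n (g :: z :: rem y (rem x l)).
Proof.
move=> [Hs Hf] Hg Hz xl yl; split.
  rewrite /= size_rem // size_rem // Hs.
  by move: yl; rewrite -Hs; case: l xl {Hs Hf} => // a [|b l] //=; rewrite inE => /eqP->; rewrite eqxx.
move=> w; rewrite !inE => /orP[/eqP->//|/orP[/eqP->//|/mem_rem/mem_rem]]; apply: Hf.
Qed.

Lemma Iset_SA n g l : (0 < n)%N -> okI n l -> fpoly g -> Iset n (SA g l).
Proof.
move=> n0 Hl Hg; apply: span_sum => x xl; apply: span_gen.
by apply: okI_cons => //; apply: fpolyM => //; apply: Hl.2.
Qed.

Lemma Iset_SB n g l : (0 < n)%N -> okI n l -> fpoly g -> Iset n (SB g l).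
Proof.
move=> n0 Hl Hg; apply: span_sum => x xl; apply: span_gen.
by apply: okI_cons => //; apply: fpolyM => //; apply: Hl.2.
Qed.

Lemma Iset_SC n g l : okI n l -> fpoly g -> Iset n (SC g l).
Proof.
move=> Hl Hg; apply: span_sum => x xl; apply: span_sum => y yl; apply: span_gen.
apply: okI_cons2 => //; apply: fpolyM; apply: Hl.2 => //.
exact: mem_rem yl.
Qed.


Variable n : nat.
Hypothesis n_gt0 : (0 < n)%N.

Lemma Iset_fpoly f : Iset n f -> fpoly f.
Proof.
move=> [L [-> H]]; apply: fpoly_sum => p pL; apply: fpolyZ.
have [Hs Hf] := H p pL.
apply: (P_Sy fpoly0 fpolyD fpolyM) => //.
by apply/eqP => e; move: n_gt0; rewrite -Hs e.
Qed.

Lemma Iset_mulSy_l g l : okI n l -> fpoly g -> Iset n (g * Sy l).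
Proof.
move=> Hl Hg; apply: (@Iset_unscale n); first by rewrite -lt0n.
have := SyKeyL g l; rewrite Hl.1 => ->.
apply: spanB; last by rewrite natmulE; apply: spanZ; apply: Iset_SB.
by apply: spanD; [apply: spanD; [apply: Iset_SA|apply: Iset_SB]|apply: Iset_SC].
Qed.

Lemma Iset_mulSy_r g l : okI n l -> fpoly g -> Iset n (Sy l * g).
Proof.
move=> Hl Hg; apply: (@Iset_unscale n); first by rewrite -lt0n.
have := SyKeyR g l; rewrite Hl.1 => ->.
apply: spanB; last by rewrite natmulE; apply: spanZ; apply: Iset_SA.
by apply: spanD; [apply: spanD; [apply: Iset_SA|apply: Iset_SB]|apply: Iset_SC].
Qed.

Lemma Iset_mull g f : fpoly g -> Iset n f -> Iset n (g * f).
Proof.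
move=> Hg [L [-> H]]; rewrite mulr_sumr; apply: span_sum => p pL.
by rewrite -scalerAr; apply: spanZ; apply: Iset_mulSy_l => //; apply: H.
Qed.

Lemma Iset_mulr g f : fpoly g -> Iset n f -> Iset n (f * g).
Proof.
move=> Hg [L [-> H]]; rewrite mulr_suml; apply: span_sum => p pL.
by rewrite -scalerAl; apply: spanZ; apply: Iset_mulSy_r => //; apply: H.
Qed.

Lemma Iset_endo psi f : endo psi -> Iset n f -> Iset n (psi f).
Proof.
move=> [H1 H2 H3 H4] [L [-> H]].
have psiD : forall x y : S, fpoly x -> fpoly y -> psi (x + y) = psi x + psi y by exact: H2.
have psiM : forall x y : S, fpoly x -> fpoly y -> psi (x * y) = psi x * psi y by exact: H4.
have lnn : forall p, p \in L -> p.2 != [::].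
  by move=> p /H [Hs _]; apply/eqP => e; move: n_gt0; rewrite -Hs e.
have fS : forall p, p \in L -> fpoly (Sy p.2).
  by move=> p pL; apply: (P_Sy fpoly0 fpolyD fpolyM); [apply: lnn | apply: (H p pL).2].
rewrite (psi_sum fpoly0 fpolyD psiD); last by move=> p pL; apply: fpolyZ; apply: fS.
apply: span_sum => p pL; have := H3 p.1 _ (fS p pL) => /= ->.
apply: spanZ; rewrite (Sy_hom fpoly0 fpolyD fpolyM psiD psiM) ?lnn //; last exact: (H p pL).2.
apply: span_gen; split; first by rewrite size_map (H p pL).1.
by move=> y /mapP[x xl ->]; apply: H1; apply: (H p pL).2.
Qed.

Lemma serX_exp (f : S) k : serX f k.+1 = f ^+ k.+1.
Proof.
rewrite /serX /=; elim: k => [|k IH]; first by rewrite expr1.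
by rewrite iterS IH serME -exprS.
Qed.

Lemma fpoly_xvar : fpoly (@xvar F).
Proof.
split; first by [].
by exists [:: [:: 0%N]] => w; rewrite inE /xvar => /negbTE ->.
Qed.

Lemma Iset_xn : Iset n (serX (@xvar F) n).
Proof.
have nf : (n`!%:R : F) != 0 by apply: natF_neq0; rewrite -lt0n fact_gt0.
have -> : serX (@xvar F) n = (n`!%:R : F)^-1 *: Sy (nseq n (@xvar F)).
  rewrite Sy_nseq natmulE scalerA mulVf // scale1r.
  by rewrite -[in LHS](prednK n_gt0) serX_exp prednK.
apply: spanZ; apply: span_gen; split; first by rewrite size_nseq.
by move=> x /nseqP[-> _]; apply: fpoly_xvar.
Qed.

Lemma Tideal_Iset : Tideal (Iset n).
Proof.
split; first exact: Iset_fpoly.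
split.
- exact: span0.
- by move=> f g; apply: spanD.
- by move=> c f; apply: spanZ.
- by move=> f g If Hg; split; [apply: Iset_mull | apply: Iset_mulr].
- by move=> psi f; apply: Iset_endo.
Qed.

Lemma TxN_Iset f : TxN n f -> Iset n f.
Proof. by move=> H; apply: H; [apply: Tideal_Iset | apply: Iset_xn]. Qed.


Definition okM n (ws : seq (seq nat)) := size ws = n /\ forall w, w \in ws -> w != [::].
Definition MS n := spanG (fun ws => Sy (map mon ws)) (okM n).

Lemma Sy_linsum (s : seq (seq nat)) (c : seq nat -> F) (l : seq S) :
  Sy ((\sum_(w <- s) c w *: mon w) :: l) = \sum_(w <- s) c w *: Sy (mon w :: l).
Proof.
elim: s => [|a s IH].
  by rewrite !big_nil; have h := Sy_linZ 0 (0 : S) l; rewrite !scale0r in h.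
by rewrite !big_cons Sy_linD Sy_linZ IH.
Qed.

Lemma expand (l : seq S) (ms : seq (seq nat)) :
  (forall x, x \in l -> fpoly x) -> (forall w, w \in ms -> w != [::]) ->
  MS (size ms + size l) (Sy (map mon ms ++ l)).
Proof.
elim: l ms => [|x l IH] ms Hl Hms.
  by rewrite cats0 addn0; apply: span_gen; split; rewrite ?size_map.
have [s [_ Hs Hx]] := fpoly_dec (Hl x (mem_head x l)).
have -> : Sy (map mon ms ++ x :: l) = Sy ((\sum_(w <- s) x w *: mon w) :: map mon ms ++ l).
  by rewrite -Hx; apply: Sy_perm; rewrite (perm_catCA (map mon ms) [:: x] l).
rewrite Sy_linsum; apply: span_sum => w ws; apply: spanZ.
have -> : Sy (mon w :: map mon ms ++ l) = Sy (map mon (rcons ms w) ++ l).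
  by apply: Sy_perm; rewrite map_rcons cat_rcons perm_sym (perm_catCA (map mon ms) [:: mon w] l).
have -> : (size ms + size (x :: l) = size (rcons ms w) + size l)%N by rewrite size_rcons /= addSnnS.
apply: IH; first by move=> y yl; apply: Hl; rewrite inE yl orbT.
by move=> v; rewrite mem_rcons inE => /orP[/eqP->|]; [apply: Hs | apply: Hms].
Qed.

Lemma Iset_MS f : Iset n f -> MS n f.
Proof.
move=> [L [-> H]]; apply: span_sum => p pL; apply: spanZ.
have [Hs Hf] := H p pL.
by have := expand (ms := [::]) Hf; rewrite /= Hs => /(_ (fun w => ltac:(by []))).
Qed.

Lemma mon_inj : injective mon.
Proof.
move=> w w' e; have := congr1 (fun f : S => f w) e; rewrite /mon eqxx.
by case: eqP => // _ /eqP; rewrite oner_eq0.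
Qed.

Lemma rem_map_inj (x : seq nat) (s : seq (seq nat)) :
  rem (mon x) (map mon s) = map mon (rem x s).
Proof.
elim: s => //= a s IH; rewrite (inj_eq mon_inj).
by case: (a == x) => //=; rewrite IH.
Qed.

Lemma sum_neq0 (I : eqType) (r : seq I) (G : I -> F) :
  \sum_(i <- r) G i != 0 -> exists2 i, i \in r & G i != 0.
Proof.
move=> Hs; case: (boolP (has (fun i => G i != 0) r)) => [/hasP[i ir Gi]|/hasPn H]; first by exists i.
by move: Hs; rewrite big1_seq ?eqxx // => i /andP[_ /H]; rewrite negbK => /eqP.
Qed.

Lemma mon_mul_supp w (g : S) v : (mon w * g) v != 0 ->
  exists2 v', v = w ++ v' & g v' != 0.
Proof.
rewrite mulsE => H.
have [i _ Hi] := sum_neq0 (r := index_enum _) H.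
move: Hi; rewrite /mon; case: (eqVneq (take i v) w) => [<-|_]; last by rewrite mul0r eqxx.
by rewrite mul1r => Hg; exists (drop i v); rewrite ?cat_take_drop.
Qed.

Lemma Sy_supp ws v : Sy (map mon ws) v != 0 -> perm_eq v (flatten ws).
Proof.
elim: {ws}(size ws).+1 {-2}ws (ltnSn (size ws)) v => // k IH ws Hk v.
case: ws Hk => [|w0 ws0] Hk.
  rewrite /= Sy_nil onesE; case: (eqVneq v [::]) => [-> _ //|_]; by rewrite eqxx.
set ws := w0 :: ws0.
rewrite SyE // sumsE big_map => /sum_neq0 [w wws].
rewrite rem_map_inj => /mon_mul_supp [v' -> Hv'].
have Hk2 : (size (rem w ws) < k)%N by rewrite size_rem.
have Hp := IH (rem w ws) Hk2 v' Hv'.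
apply: (@perm_trans _ (w ++ flatten (rem w ws))); first by rewrite perm_cat2l.
by have := perm_flatten (perm_to_rem wws); rewrite perm_sym.
Qed.


Variable m : nat.
Local Notation B := (Bs m n).
Definition GB (j : 'I_(size B)) : S := Sy (map mon (nth [::] B j)).
Definition FS (f : S) := exists c : 'I_(size B) -> F, f = \sum_j c j *: GB j.

Lemma FS0 : FS 0.
Proof. by exists (fun _ => 0); rewrite big1 // => j _; rewrite scale0r. Qed.

Lemma FS_add f a ws : FS f -> ws \in B -> FS (a *: Sy (map mon ws) + f).
Proof.
move=> [c Hc] wsB.
have jlt : (index ws B < size B)%N by rewrite index_mem.
pose j := Ordinal jlt.
exists (fun k => c k + (if k == j then a else 0)).
under eq_bigr => k _ do rewrite scalerDl.
rewrite big_split /= -Hc addrC; congr (_ + _).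
rewrite (bigD1 j) //= eqxx big1 ?addr0; last by move=> k /negbTE ->; rewrite scale0r.
by rewrite /GB /= nth_index.
Qed.

Definition good (ws : seq (seq nat)) := perm_eq (flatten ws) (iota 0 m).

Lemma FS_filter (L : seq (F * seq (seq nat))) : (forall p, p \in L -> okM n p.2) ->
  FS (\sum_(p <- L | good p.2) p.1 *: Sy (map mon p.2)).
Proof.
elim: L => [|p L IH] H; first by rewrite big_nil; apply: FS0.
have HL : forall q, q \in L -> okM n q.2 by move=> q qL; apply: H; rewrite inE qL orbT.
rewrite big_cons; case: ifP => gp; last exact: IH.
have [Hs Hne] := H p (mem_head p L).
have [b bB pb] := Bs_cover Hs Hne gp.
rewrite (Sy_perm (perm_map mon pb)).
exact: FS_add (IH HL) bB.
Qed.

Lemma MS_Vm_FS f : Vm m f -> MS n f -> FS f.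
Proof.
move=> [_ Hv] [L [Hf H]].
suff -> : f = \sum_(p <- L | good p.2) p.1 *: Sy (map mon p.2) by apply: FS_filter.
apply: serE => v; rewrite sumsE.
case: (boolP (perm_eq v (iota 0 m))) => Hvm.
  rewrite Hf sumsE (bigID (fun p => good p.2)) /= [X in _ + X = _]big1 ?addr0 // => p ng.
  rewrite scalesE; case: (eqVneq (Sy (map mon p.2) v) 0) => [->|nz]; first by rewrite mulr0.
  have pv := Sy_supp nz; rewrite perm_sym in pv.
  by move: ng; rewrite /good (perm_trans pv Hvm).
rewrite big1; last first.
  move=> p gp; rewrite scalesE; case: (eqVneq (Sy (map mon p.2) v) 0) => [->|nz]; first by rewrite mulr0.
  have pv := Sy_supp nz.
  by move: Hvm; rewrite (perm_trans pv gp).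
by case: (eqVneq (f v) 0) => // nz; move: Hvm; rewrite (Hv _ nz).
Qed.

End Main.

Lemma fact_dvd a b : (a <= b)%N -> (a`! %| b`!)%N.
Proof.
move=> ab; elim: b ab => [|b IH]; first by rewrite leqn0 => /eqP->.
rewrite leq_eqVlt => /orP[/eqP->//|]; rewrite ltnS => /IH H.
by rewrite factS dvdn_mull.
Qed.

Lemma indep_le (F : fieldType) (N : nat) (Gs : 'I_N -> ser F) (fs : seq (ser F)) :
  (forall i, (i < size fs)%N -> exists c : 'I_N -> F, nth (@ser0 F) fs i = \sum_j c j *: Gs j) ->
  lin_indep fs -> (size fs <= N)%N.
Proof.
move=> Hsp Hind; set k := size fs.
have Hsp' : forall i : 'I_k, exists c : 'I_N -> F, nth (@ser0 F) fs i = \sum_j c j *: Gs j.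
  by move=> i; apply: Hsp; rewrite ltn_ord.
have [cf Hcf] := choice Hsp'.
pose M : 'M[F]_(k, N) := \matrix_(i, j) cf i j.
rewrite leqNgt; apply/negP => Nk.
have rk : (0 < \rank (kermx M))%N.
  rewrite mxrank_ker subn_gt0; apply: leq_ltn_trans (rank_leq_col M) Nk.
case: (boolP [exists i, exists j, kermx M i j != 0]); last first.
  move=> H; suff : kermx M == 0 by rewrite -mxrank_eq0 => /eqP e; move: rk; rewrite e.
  apply/eqP/matrixP => i j; rewrite [X in _ = X]mxE; apply/eqP; apply/negPn/negP => nz.
  by move/negP: H; apply; apply/existsP; exists i; apply/existsP; exists j.
case/existsP => i /existsP [j0 nz].
pose cc (t : nat) : F := odflt 0 (omap (kermx M i) (insub t)).
have ccE : forall t : 'I_k, cc t = kermx M i t by move=> t; rewrite /cc valK.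
have KM : forall j, \sum_(t < k) kermx M i t * cf t j = 0.
  move=> j; have := congr1 (fun A : 'M_(k, N) => A i j) (mulmx_ker M).
  rewrite [X in X = _]mxE [X in _ = X]mxE => e.
  transitivity (\sum_(t < k) kermx M i t * M t j); last exact: e.
  by apply: eq_bigr => t _; congr (_ * _); rewrite /M mxE.
have Hw : forall w, \sum_(t < size fs) cc t * nth (@ser0 F) fs t w = 0.
  move=> w.
  transitivity (\sum_(t < k) \sum_(j < N) kermx M i t * (cf t j * Gs j w)).
    apply: eq_bigr => t _; rewrite ccE Hcf sumsE big_distrr; apply: eq_bigr => j _.
    by rewrite scalesE.
  rewrite exchange_big /= big1 // => j _.
  rewrite (eq_bigr (fun t => kermx M i t * cf t j * Gs j w)); last by move=> t _; rewrite mulrA.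
  by rewrite -big_distrl /= KM mul0r.
have := Hind cc Hw (val j0) (ltn_ord j0).
by rewrite ccE => /eqP; rewrite (negbTE nz).
Qed.



Theorem lemma5p1 (F : fieldType) (charF0 : [pchar F]%R =i pred0) (n m : nat)
    (n_gt0 : (0 < n)%N) (n_le_m : (n <= m)%N) (fs : seq (ser F)) :
  (forall i, (i < size fs)%N -> W n m (nth (@ser0 F) fs i)) -> lin_indep fs ->
  (size fs <= 'C(m, n) * (m.-1`! %/ n.-1`!))%N.
Proof.
move=> HW Hind.
have -> : ('C(m, n) * (m.-1`! %/ n.-1`!) = size (Bs m n))%N.
  have nm : (n.-1 <= m.-1)%N by rewrite -!subn1 leq_sub2r.
  by rewrite muln_divA ?fact_dvd // -size_Bs // mulnK // fact_gt0.
apply: (indep_le (Gs := @GB F n m)) => // i ilt.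
have [HV HT] := HW i ilt.
exact: (MS_Vm_FS HV (Iset_MS (TxN_Iset charF0 n_gt0 HT))).
Qed.
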